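(* Let $n,m$ be positive integers. For a dominant region $R\in\mathcal{R}^m_n$ with Shi tableau entries $k_{i,j}=k_{i,j}(R)$, $1\le i\le j\le n$, define $\varphi_n(R)=(\lambda_1,\dots,\lambda_n)$ with $\lambda_i=\sum_{j=i}^n k_{i,j}$. Then $\varphi_n$ is a bijection from $\mathcal{R}^m_n$ onto $\mathcal{P}^m_n$.
   Context: Type $A_n$: $V=\{x\in\mathbb{R}^{n+1}:\sum x_i=0\}$, positive roots $\alpha_{ij}=\varepsilon_i-\varepsilon_{j+1}$ ($1\le i\le j\le n$), $H_{\alpha,k}=\{v\in V:\langle v,\alpha\rangle=k\}$. $\mathrm{Cat}^m(A_n)$ is the arrangement of the $H_{\alpha,k}$, $\alpha$ positive, $0\le k\le m$; $\mathcal{R}^m_n$ is the set of its dominant regions (regions contained in $\{v:\langle v,\alpha\rangle\ge0\ \forall\alpha>0\}$). For $R\in\mathcal{R}^m_n$ and $1\le i\le j\le n$, $k_{i,j}(R)$ is the unique integer $k\in\{0,\dots,m\}$ such that for all $x\in R$: $k\le\langle\alpha_{ij},x\rangle\le k+1$ if $k<m$, and $\langle\alpha_{ij},x\rangle\ge m$ if $k=m$ (i.e. the number of hyperplanes $H_{\alpha_{ij},t}$, $1\le t\le m$, separating $R$ from the origin). The collection $\{k_{i,j}(R)\}$ is the Shi tableau of $R$. $\mathcal{P}^m_n$ is the set of integer partitions $(\lambda_1\ge\cdots\ge\lambda_n\ge0)$ with $\lambda_i\le m(n-i+1)$. *)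

(* Defs.v *)
From HB Require Import structures.
From mathcomp Require Import all_boot all_order all_algebra.
From mathcomp Require Import all_classical all_reals all_analysis.
Unset Printing Implicit Defensive.
Import Order.TTheory GRing.Theory Num.Theory.
Import numFieldTopology.Exports numFieldNormedType.Exports.
Local Open Scope classical_set_scope.
Local Open Scope ring_scope.

(* The ambient space R^{n+1} is 'rV[R]_(n.+1); coordinate eps_{a} (1-based a)
   is column index a-1.  Positive roots alpha_{ij} = eps_i - eps_{j+1},
   1 <= i <= j <= n, are indexed here 0-based by (i, j) with i <= j < n,
   so that <alpha, x> = x_(i) - x_(j+1) (0-based columns). *)

Definition root_pair (R : realType) (n : nat) (x : 'rV[R]_(n.+1)) (i j : nat) : R :=
  x ord0 (inord i) - x ord0 (inord j.+1).

Definition Vspace (R : realType) (n : nat) : set 'rV[R]_(n.+1) :=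
  [set x | \sum_(a < n.+1) x ord0 a = 0].

Definition cat_complement (R : realType) (n m : nat) : set 'rV[R]_(n.+1) :=
  [set x | Vspace R n x /\
     (forall i j k : nat, (i <= j)%N -> (j < n)%N -> (k <= m)%N ->
        root_pair R n x i j <> k%:R)].

Definition cat_regions (R : realType) (n m : nat) : set (set 'rV[R]_(n.+1)) :=
  [set S | exists x, cat_complement R n m x /\
                     S = connected_component (cat_complement R n m) x].

Definition dominant_cone (R : realType) (n : nat) : set 'rV[R]_(n.+1) :=
  [set x | Vspace R n x /\
     (forall i j : nat, (i <= j)%N -> (j < n)%N -> 0 <= root_pair R n x i j)].

Definition dominant_regions (R : realType) (n m : nat) : set (set 'rV[R]_(n.+1)) :=
  [set S | cat_regions R n m S /\ S `<=` dominant_cone R n].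

(* Shi tableau entry k_{i,j}(S): number of hyperplanes H_{alpha_ij, t},
   1 <= t <= m, separating S from the origin (i.e. S lies on the side
   <alpha_ij, x> > t, the origin being on the side < t). *)
Definition shi_k (R : realType) (n m : nat) (S : set 'rV[R]_(n.+1)) (i j : nat) : nat :=
  (\sum_(1 <= t < m.+1)
     nat_of_bool `[< exists2 x, S x & ((t%:R : R) < root_pair R n x i j)%R >])%N.

(* phi_n(S) = (lambda_1, ..., lambda_n), lambda_i = sum_{j=i}^n k_{i,j}
   (0-based: lambda_i = sum_{i <= j < n} k_{i,j}). *)
Definition phi_shi (R : realType) (n m : nat) (S : set 'rV[R]_(n.+1)) : seq nat :=
  [seq (\sum_(i <= j < n) shi_k R n m S i j)%N | i <- iota 0 n].

(* P^m_n: partitions lambda_1 >= ... >= lambda_n >= 0 with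
   lambda_i <= m (n - i + 1)  (0-based: lambda_i <= m (n - i)). *)
Definition shi_partitions (n m : nat) : set (seq nat) :=
  [set l | size l = n /\ sorted geq l /\
           (forall i : nat, (i < n)%N -> (nth 0%N l i <= m * (n - i))%N)].

(* Main.v *)
Require Import Defs.
From HB Require Import structures.
From mathcomp Require Import all_boot all_order all_algebra.
From mathcomp Require Import all_classical all_reals all_analysis.
Import numFieldTopology.Exports numFieldNormedType.Exports.
From mathcomp Require Import lra zify.
Import Order.TTheory GRing.Theory Num.Theory.
Local Open Scope classical_set_scope.
Local Open Scope ring_scope.

Section Topo.
Variables (R : realType) (n : nat).
Local Notation M := 'rV[R]_(n.+1).

Lemma rp_cont i j : continuous (fun x : M => root_pair R n x i j).
Proof.
move=> x; rewrite /root_pair.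
apply: (@continuousB _ _ _ (fun x : M => x ord0 (inord i)) (fun x : M => x ord0 (inord j.+1))); exact: coord_continuous.
Qed.

Lemma sign_const (C : set M) i j (t : R) : connected C ->
  (forall w, C w -> root_pair R n w i j != t) ->
  forall x z, C x -> C z -> t < root_pair R n x i j -> t < root_pair R n z i j.
Proof.
move=> cC ne x z Cx Cz tx.
have := connected_continuous_connected cC (continuous_subspaceT (rp_cont i j)).
move/connected_intervalP => I.
rewrite ltNge; apply/negP => zt.
have : [set root_pair R n x0 i j | x0 in C] t.
  apply: (I (root_pair R n z i j) (root_pair R n x i j)).
  - by exists z.
  - by exists x.
  by rewrite zt (ltW tx).
by case=> w Cw wt; move: (ne w Cw); rewrite wt eqxx.
Qed.

Lemma seg_conn (x z : M) : connected [set x + s *: (z - x) | s in `[0%R, 1%R]].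
Proof.
apply: connected_continuous_connected; first exact: segment_connected.
apply: continuous_subspaceT => s.
apply: (@continuousD _ _ _ (fun _ => x) (fun s : R => s *: (z - x))).
  exact: cst_continuous.
by apply: continuousZr_tmp.
Qed.
End Topo.


Lemma count_nth_iota {T : Type} (x0 : T) p (s : seq T) :
  count p s = count (fun i => p (nth x0 s i)) (iota 0 (size s)).
Proof. by rewrite -{1}(mkseq_nth x0 s) /mkseq count_map. Qed.

Lemma count_iota_lt k N : (k <= N)%N -> count (fun i => (i < k)%N) (iota 0 N) = k.
Proof.
move=> kN; rewrite -(subnKC kN) iotaD count_cat add0n.
rewrite (eq_in_count (a2 := predT)); last by move=> i; rewrite mem_iota => /andP[_].
rewrite count_predT size_iota.
rewrite (eq_in_count (a2 := pred0)); last first.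
  by move=> i; rewrite mem_iota => /andP[ki _] /=; rewrite ltnNge ki.
by rewrite count_pred0 addn0.
Qed.

Section G.
Variable R : realType.

Lemma exists_u (s : seq R) (y0 : R) k : uniq s -> y0 \notin s ->
  (count (fun z => (z < y0)%R) s <= k <= size s)%N ->
  exists u, [/\ y0 < u, u \notin s & count (fun z => z < u) s = k].
Proof.
move=> us y0s /andP[ck kN].
set s' := sort <=%O s.
have ss : sorted <%O s' by rewrite sort_lt_sorted.
have cs p : count p s' = count p s by apply: count_sort.
have ms : s' =i s by apply: mem_sort.
have Ns : size s' = size s by rewrite size_sort.
set N := size s in kN Ns.
set f := fun i => nth 0 s' i.
have mono i j : (i < j < N)%N -> f i < f j.
  move=> /andP[ij jN]; apply: (sorted_ltn_nth lt_trans) => //; rewrite inE Ns //.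
  exact: ltn_trans ij jN.
have mono' i j : (i <= j < N)%N -> f i <= f j.
  move=> /andP[ij jN]; rewrite leq_eqVlt in ij; case/orP: ij => [/eqP->//|ij].
  by apply/ltW/mono; rewrite ij.
have fin i : (i < N)%N -> f i \in s by move=> iN; rewrite -ms mem_nth ?Ns.
have cnt (u : R) : (forall i, (i < N)%N -> (f i < u) = (i < k)%N) ->
    count (fun z => z < u) s = k.
  move=> H; rewrite -cs (count_nth_iota 0) Ns -(@count_iota_lt k N kN).
  by apply: eq_in_count => i; rewrite mem_iota => /andP[_ iN]; apply: H.
have y0k : (k < N)%N -> y0 < f k.
  move=> kN'; rewrite ltNge le_eqVlt; apply/negP => /orP[/eqP e|lt].
    by move: (fin _ kN'); rewrite e (negbTE y0s).
  have : (k.+1 <= count (fun z => (z < y0)%R) s)%N.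
    rewrite -cs (count_nth_iota 0) Ns -{1}(@count_iota_lt k.+1 N kN').
    apply: sub_count => i /= ik; apply: le_lt_trans lt; apply: mono'.
    by rewrite -ltnS ik kN'.
  by move=> h; move: (leq_trans h ck); rewrite ltnn.
pose lo := if k is k'.+1 then Num.max y0 (f k') else y0.
pose hi := if (k < N)%N then f k else lo + 1.
have H1 i : (i < N)%N -> (i < k)%N -> f i <= lo.
  move=> iN ik; rewrite /lo; case E: k => [|k']; first by rewrite E in ik.
  by rewrite le_max; apply/orP; right; apply: mono'; rewrite E in ik kN; lia.
have H2 i : (i < N)%N -> (k <= i)%N -> hi <= f i.
  move=> iN ki; rewrite /hi; have -> : (k < N)%N by lia.
  by apply: mono'; rewrite ki.
have H3 : y0 <= lo by rewrite /lo; case E: k => // [k']; rewrite le_max lexx.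
have H4 : lo < hi.
  rewrite /hi; case: ifP => kN'; last by lra.
  have yk := y0k kN'; rewrite /lo; case E: k => [|k']; first by rewrite -E.
  by rewrite gt_max -E yk; apply: mono; rewrite E in kN' *; lia.
pose u := (lo + hi) / 2.
have lou : lo < u by rewrite /u; lra.
have uhi : u < hi by rewrite /u; lra.
have Hu i : (i < N)%N -> (f i < u) = (i < k)%N.
  move=> iN; case: (ltnP i k) => ik.
    by apply: le_lt_trans (H1 _ iN ik) lou.
  by apply/negbTE; rewrite -leNgt; apply: ltW; apply: lt_le_trans (H2 _ iN ik).
exists u; split.
- exact: le_lt_trans H3 lou.
- apply/negP; rewrite -ms => /(nthP 0) [i]; rewrite Ns => iN fi.
  have := Hu i iN; rewrite /f fi ltxx.
  case: (ltnP i k) => // ik _.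
  by move: (H2 _ iN ik); rewrite /f fi => /(lt_le_trans uhi); rewrite ltxx.
- exact: cnt.
Qed.
End G.


Section Comb.
Variable R : realType.

Definition Kv (m : nat) (v : R) : nat :=
  (\sum_(1 <= t < m.+1) nat_of_bool (t%:R < v)%R)%N.

Lemma Kle m v : (Kv m v <= m)%N.
Proof.
rewrite /Kv; apply: leq_trans (_ : (\sum_(1 <= t < m.+1) 1 <= m)%N).
  by apply: leq_sum => t _; case: (_ < _).
by rewrite sum_nat_const_nat subn1 muln1.
Qed.

Lemma Kchar m v d : (1 <= d <= m)%N -> (d%:R < v) = (d <= Kv m v)%N.
Proof.
move=> /andP[d1 dm]; rewrite /Kv (@big_cat_nat _ _ _ d.+1) //=.
all: try (by rewrite ltnS); try (by []).

case: (boolP (d%:R < v)) => dv.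
  rewrite (@eq_big_nat _ _ _ 1 d.+1 _ (fun _ => 1%N)); last first.
    move=> t /andP[_ td]; have -> : t%:R < v by apply: le_lt_trans dv; rewrite ler_nat; lia.
    by [].
  by rewrite sum_nat_const_nat subn1 muln1 leq_addr.
apply/esym/negbTE; rewrite -ltnNge.
rewrite (@eq_big_nat _ _ _ d.+1 m.+1 _ (fun _ => 0%N)); last first.
  move=> t /andP[dt _]; have -> : (t%:R < v) = false.
    apply/negbTE; rewrite -leNgt; apply: le_trans (_ : d%:R <= _).
      by rewrite leNgt.
    by rewrite ler_nat; lia.
  by [].
rewrite big1_eq addn0 (@big_cat_nat _ _ _ d) //= big_nat1.
have -> : (d%:R < v) = false by apply/negbTE.
rewrite addn0; apply: leq_ltn_trans (_ : (\sum_(1 <= t < d) 1 < d)%N).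
  by apply: leq_sum => t _; case: (_ < _).
by rewrite sum_nat_const_nat subn1 muln1; lia.
Qed.

Lemma Kmono m v w : v <= w -> (Kv m v <= Kv m w)%N.
Proof.
move=> vw; apply: leq_sum => t _.
case: (boolP (t%:R < v)) => // h.
by have -> : t%:R < w by apply: lt_le_trans vw.
Qed.

Lemma Kle0 m v : v <= 1 -> Kv m v = 0%N.
Proof.
move=> v1; apply: big1_seq => t /andP[_]; rewrite mem_index_iota => /andP[t1 _].
have -> : (t%:R < v) = false => //.
apply/negbTE; rewrite -leNgt; apply: le_trans v1 _; by rewrite ler1n.
Qed.


Section Inj.
Variables (m n : nat).
Implicit Types r : nat -> nat -> R.

Definition add_ok r := forall i j1 j2, (i <= j1)%N -> (j1 < j2)%N -> (j2 < n)%N ->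
  r i j2 = r i j1 + r j1.+1 j2.
Definition pos_ok r := forall i j, (i <= j)%N -> (j < n)%N -> 0 < r i j.
Definition nint_ok r := forall i j t, (i <= j)%N -> (j < n)%N -> (t <= m)%N ->
  r i j != t%:R.

Lemma key_row r r' i j1 j2 : add_ok r -> add_ok r' -> pos_ok r -> pos_ok r' ->
  nint_ok r -> nint_ok r' ->
  (forall i' j, (i < i')%N -> (i' <= j)%N -> (j < n)%N ->
     Kv m (r i' j) = Kv m (r' i' j)) ->
  (i <= j1)%N -> (j1 < n)%N -> (i <= j2)%N -> (j2 < n)%N ->
  (Kv m (r' i j1) < Kv m (r i j1))%N -> (Kv m (r i j2) < Kv m (r' i j2))%N -> False.
Proof.
move=> ad ad' po po' ni ni' low ij1 j1n ij2 j2n lt1 lt2.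
set t1 := Kv m (r i j1) in lt1.
set t2 := Kv m (r' i j2) in lt2.
have t1m : (1 <= t1 <= m)%N by rewrite /t1 Kle andbT; lia.
have t2m : (1 <= t2 <= m)%N by rewrite /t2 Kle andbT; lia.
have a1 : t1%:R < r i j1 by rewrite (@Kchar m).
have a2 : t2%:R < r' i j2 by rewrite (@Kchar m).
have b1 : r' i j1 < t1%:R.
  have : ~~ (t1%:R < r' i j1) by rewrite (@Kchar m) // -ltnNge.
  rewrite -leNgt le_eqVlt => /orP[/eqP e|h]; last exact: h.
  case/andP: t1m => _ tm; by move: (ni' i j1 t1 ij1 j1n tm); rewrite e eqxx.
have b2 : r i j2 < t2%:R.
  have : ~~ (t2%:R < r i j2) by rewrite (@Kchar m) // -ltnNge.
  rewrite -leNgt le_eqVlt => /orP[/eqP e|h]; last exact: h.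
  case/andP: t2m => _ tm; by move: (ni i j2 t2 ij2 j2n tm); rewrite e eqxx.
case: (ltngtP j1 j2) => [j12|j21|e]; last first.
- by move: lt1 lt2; rewrite /t1 /t2 e; lia.
-
  have e1 := ad i j2 j1 ij2 j21 j1n.
  have e1' := ad' i j2 j1 ij2 j21 j1n.
  have p' := po' j2.+1 j1 j21 j1n.
  have lt21 : (t2 < t1)%N by rewrite -(ltr_nat R); lra.
  have dm : (1 <= t1 - t2 <= m)%N by lia.
  have dR : (t1 - t2)%:R = t1%:R - t2%:R :> R by rewrite natrB // ltnW.
  have c1 := @Kchar m (r j2.+1 j1) _ dm.
  have c2 := @Kchar m (r' j2.+1 j1) _ dm.
  rewrite (low j2.+1 j1) in c1; try lia.
  rewrite -c2 dR in c1.
  have h1 : t1%:R - t2%:R < r j2.+1 j1 by lra.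
  have h2 : r' j2.+1 j1 < t1%:R - t2%:R by lra.
  by move: c1; rewrite h1 => /esym; rewrite ltNge (ltW h2).
-
  have e1 := ad i j1 j2 ij1 j12 j2n.
  have e1' := ad' i j1 j2 ij1 j12 j2n.
  have p := po j1.+1 j2 j12 j2n.
  have lt12 : (t1 < t2)%N by rewrite -(ltr_nat R); lra.
  have dm : (1 <= t2 - t1 <= m)%N by lia.
  have dR : (t2 - t1)%:R = t2%:R - t1%:R :> R by rewrite natrB // ltnW.
  have c1 := @Kchar m (r j1.+1 j2) _ dm.
  have c2 := @Kchar m (r' j1.+1 j2) _ dm.
  rewrite (low j1.+1 j2) in c1; try lia.
  rewrite -c2 dR in c1.
  have h1 : r j1.+1 j2 < t2%:R - t1%:R by lra.
  have h2 : t2%:R - t1%:R < r' j1.+1 j2 by lra.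
  by move: c1; rewrite h2 ltNge (ltW h1).
Qed.


Lemma sum_lt a b j0 (f g : nat -> nat) : (forall j, (a <= j < b)%N -> (f j <= g j)%N) ->
  (a <= j0 < b)%N -> (f j0 < g j0)%N ->
  (\sum_(a <= j < b) f j < \sum_(a <= j < b) g j)%N.
Proof.
move=> fg /andP[aj jb] lt.
have jb' := ltnW jb.
rewrite (big_cat_nat (n:=j0) (m:=a) (p:=b) (F:=f) aj jb').
rewrite (big_cat_nat (n:=j0) (m:=a) (p:=b) (F:=g) aj jb').
rewrite (big_ltn (m:=j0) (n:=b) (F:=f) jb) (big_ltn (m:=j0) (n:=b) (F:=g) jb).
have h1 : (\sum_(a <= j < j0) f j <= \sum_(a <= j < j0) g j)%N.
  rewrite !big_nat; apply: leq_sum => j /andP[aj' jj]; apply: fg; lia.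
have h2 : (\sum_(j0.+1 <= j < b) f j <= \sum_(j0.+1 <= j < b) g j)%N.
  rewrite !big_nat; apply: leq_sum => j /andP[aj' jj]; apply: fg; lia.
rewrite /=. lia.
Qed.

Lemma inj_K r r' : add_ok r -> add_ok r' -> pos_ok r -> pos_ok r' ->
  nint_ok r -> nint_ok r' ->
  (forall i, (i < n)%N -> (\sum_(i <= j < n) Kv m (r i j) = \sum_(i <= j < n) Kv m (r' i j))%N) ->
  forall i j, (i <= j)%N -> (j < n)%N -> Kv m (r i j) = Kv m (r' i j).
Proof.
move=> ad ad' po po' ni ni' sums.
suff H : forall k i, (n - i <= k)%N -> forall i' j, (i <= i')%N -> (i' <= j)%N -> (j < n)%N ->
    Kv m (r i' j) = Kv m (r' i' j).
  by move=> i j ij jn; apply: (H n i) => //; lia.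
elim=> [|k IH] i.
  by move=> h i' j ii' i'j jn; exfalso; lia.
move=> h; case: (leqP (n - i) k) => [hk|hk]; first exact: IH.
have low : forall i' j, (i < i')%N -> (i' <= j)%N -> (j < n)%N ->
    Kv m (r i' j) = Kv m (r' i' j).
  by move=> i' j ii' i'j jn; apply: (IH i.+1) => //; lia.
move=> i' j ii' i'j jn.
case: (ltngtP i i') => [lt|gt|e]; first exact: low; first by exfalso; lia.
subst i'.
have row : forall rr rr', add_ok rr -> add_ok rr' -> pos_ok rr -> pos_ok rr' ->
    nint_ok rr -> nint_ok rr' ->
    (forall i' j, (i < i')%N -> (i' <= j)%N -> (j < n)%N ->
       Kv m (rr i' j) = Kv m (rr' i' j)) ->
    (\sum_(i <= j < n) Kv m (rr i j) = \sum_(i <= j < n) Kv m (rr' i j))%N ->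
    forall j, (i <= j)%N -> (j < n)%N -> (Kv m (rr i j) < Kv m (rr' i j))%N -> False.
  move=> rr rr' Ad Ad' Po Po' Ni Ni' Low S j2 ij2 j2n lt2.
  have [[j1 [ij1 j1n lt1]]|none] := pselect (exists j1, [/\ (i <= j1)%N, (j1 < n)%N &
       (Kv m (rr' i j1) < Kv m (rr i j1))%N]).
    exact: (@key_row rr rr' i j1 j2 Ad Ad' Po Po' Ni Ni' Low ij1 j1n ij2 j2n lt1 lt2).
  have : (\sum_(i <= j < n) Kv m (rr i j) < \sum_(i <= j < n) Kv m (rr' i j))%N.
    apply: (@sum_lt i n j2) => //; last by rewrite ij2.
    move=> j1 /andP[ij1 j1n]; rewrite leqNgt; apply/negP => lt1.
    by apply: none; exists j1.
  by rewrite S ltnn.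
have si := sums i (leq_ltn_trans i'j jn).
case: (ltngtP (Kv m (r i j)) (Kv m (r' i j))) => [lt|gt|//].
  by exfalso; exact: (row r r' ad ad' po po' ni ni' low si j i'j jn lt).
exfalso; apply: (row r' r ad' ad po' po ni' ni _ (esym si) j i'j jn gt).
by move=> ? ? ? ? ?; symmetry; apply: low.
Qed.

End Inj.
End Comb.
Arguments Kv {R}. Arguments Kle0 {R}. Arguments Kchar {R}. Arguments Kle {R}. Arguments Kmono {R}.
Arguments inj_K {R}.


Section Build.
Variables (R : realType) (m n : nat).

Lemma count_sumb {T : Type} (p : pred T) s : count p s = (\sum_(x <- s) nat_of_bool (p x))%N.
Proof. by elim: s => [|x s IH]; rewrite ?big_nil ?big_cons //= IH. Qed.

Lemma cnt_eq (y : nat -> R) a (u : R) :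
  count (fun z => z < u) [seq y j.+1 + t%:R | j <- iota a (n - a), t <- iota 1 m] =
  (\sum_(a <= j < n) Kv m (u - y j.+1))%N.
Proof.
rewrite count_flatten sumnE big_map /index_iota; rewrite big_map; apply: eq_bigr => j _.
rewrite count_map count_sumb /Kv /index_iota subn1 /=; apply: eq_bigr => t _.
by congr nat_of_bool; rewrite /preim /=; apply/idP/idP => h; lra.
Qed.

Definition Qprop (lam : seq nat) (k : nat) (y : nat -> R) :=
  (forall i j, (n - k <= i)%N -> (i <= j)%N -> (j < n)%N ->
     y j.+1 < y i /\ forall t, (t <= m)%N -> y i - y j.+1 != t%:R) /\
  (forall i, (n - k <= i)%N -> (i < n)%N ->
     (\sum_(i <= j < n) Kv m (y i - y j.+1))%N = nth 0%N lam i).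

Lemma build (lam : seq nat) : size lam = n -> sorted geq lam ->
  (forall i, (i < n)%N -> (nth 0%N lam i <= m * (n - i))%N) ->
  forall k, (k <= n)%N -> exists y, Qprop lam k y.
Proof.
move=> sz srt bnd; elim=> [|k IH] kn.
  exists (fun _ => 0); split => [i j ni ij jn|i ni iN]; exfalso; lia.
have [y [Py Sy]] := IH (ltnW kn).
set a := (n - k.+1)%N.
have an : (a < n)%N by rewrite /a; lia.
have ea : (n - k)%N = a.+1 by rewrite /a; lia.
rewrite ea in Py Sy.
set s := [seq y j.+1 + t%:R | j <- iota a (n - a), t <- iota 1 m].
set y0 := y a.+1.
have us : uniq s.
  apply: allpairs_uniq; try exact: iota_uniq.
  move=> [j t] [j' t'] /allpairsP [[j1 t1] /= [hj1 ht1 [-> ->]]]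
        /allpairsP [[j2 t2] /= [hj2 ht2 [-> ->]]] /= e.
  move: hj1 hj2 ht1 ht2; rewrite !mem_iota => /andP[aj1 j1n] /andP[aj2 j2n]
     /andP[t11 t1m] /andP[t21 t2m].
  have gen : forall j1 j2 t1 t2, (a <= j1)%N -> (j1 < j2)%N -> (j2 < n)%N ->
      (1 <= t1)%N -> (t1 < 1 + m)%N -> (1 <= t2)%N -> (t2 < 1 + m)%N ->
      y j1.+1 + t1%:R = y j2.+1 + t2%:R -> False.
    move=> i1 i2 s1 s2 ai1 i12 i2n s11 s1m s21 s2m ee.
    have [lt ne] := Py i1.+1 i2 ltac:(lia) i12 i2n.
    have lts : (s1 < s2)%N by rewrite -(ltr_nat R); lra.
    have := ne (s2 - s1)%N ltac:(lia); rewrite natrB; last exact: ltnW lts.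
    have -> : y i1.+1 - y i2.+1 = s2%:R - s1%:R by lra.
    by rewrite eqxx.
  case: (ltngtP j1 j2) => [lt|gt|ej].
  - by exfalso; apply: (gen j1 j2 t1 t2 aj1 lt ltac:(lia) t11 t1m t21 t2m e).
  - by exfalso; apply: (gen j2 j1 t2 t1 aj2 gt ltac:(lia) t21 t2m t11 t1m (esym e)).
  - subst j2; move/addrI: e => /eqP; rewrite eqr_nat => /eqP -> //.
have y0s : y0 \notin s.
  apply/negP => /allpairsP [[j t] /= []]; rewrite !mem_iota => /andP[aj jn] /andP[t1 tm] e.
  case: (ltngtP a j) => [lt|gt|ej]; [|exfalso; lia|].
  - have [_ ne] := Py a.+1 j (leqnn _) lt ltac:(lia).
    move: (ne t ltac:(lia)); rewrite /y0 in e; rewrite e.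
    have -> : y j.+1 + t%:R - y j.+1 = t%:R by lra.
    by rewrite eqxx.
  - subst j; move: e; rewrite /y0 => /eqP; rewrite -subr_eq0 opprD addrA subrr sub0r oppr_eq0 pnatr_eq0.
    by move/eqP => t0; move: t1; rewrite t0.
have c0 : (count (fun z => (z < y0)%R) s <= nth 0%N lam a)%N.
  rewrite cnt_eq big_ltn // subrr Kle0 ?ler01 // add0n.
  case: (ltnP a.+1 n) => h.
    rewrite Sy //.
    have := @sorted_ltn_nth _ geq (fun y x z h1 h2 => leq_trans h2 h1) 0%N lam srt a a.+1.
    by rewrite !inE sz an h ltnSn; apply.
  by rewrite big_geq.
have c1 : (nth 0%N lam a <= size s)%N.
  by rewrite size_allpairs !size_iota mulnC; apply: bnd.
have [u [y0u us' cu]] := @exists_u R s y0 _ us y0s (introT andP (conj c0 c1)).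
exists (fun b => if b == a then u else y b); split.
- move=> i j ai ij jn.
  have jna : (j.+1 == a) = false by apply/negbTE; lia.
  rewrite jna; case: (eqVneq i a) => [ia|ina].
    subst i; have yj : y j.+1 <= y0.
      case: (ltngtP a j) => [lt|gt|ej]; [|exfalso; lia|by rewrite /y0 ej].
      by apply/ltW; have [] := Py a.+1 j (leqnn _) lt jn.
    split; first exact: le_lt_trans yj y0u.
    move=> t tm; case: t tm => [|t] tm.
      by apply/eqP => e; move: (le_lt_trans yj y0u); rewrite -subr_gt0 e ltxx.
    apply/eqP => e; move: us'; rewrite /s.
    have -> : u = y j.+1 + t.+1%:R by rewrite -e; lra.
    rewrite (allpairs_f (fun j0 t0 => y j0.+1 + t0%:R)) // mem_iota; lia.
  by apply: Py => //; lia.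
- move=> i ai iN; case: (eqVneq i a) => [ia|ina].
    subst i.
    rewrite -cu cnt_eq; apply: eq_big_nat => j /andP[aj jn].
    by have -> : (j.+1 == a) = false by apply/negbTE; lia.
  rewrite -Sy //; last by lia.
  apply: eq_big_nat => j /andP[aj jn].
  have -> : (j.+1 == a) = false by apply/negbTE; lia.
  by [].
Qed.

End Build.


Section Main.
Variables (R : realType) (n m : nat).
Local Notation M := 'rV[R]_(n.+1).
Local Notation comp := (cat_complement R n m).
Local Notation rp x := (root_pair R n x).

Lemma rp_add (x : M) : add_ok R n (rp x).
Proof. by move=> i j1 j2 _ _ _; rewrite /root_pair; lra. Qed.

Lemma sign_S (x0 x z : M) t i j : connected_component comp x0 x ->
  connected_component comp x0 z -> (t <= m)%N -> (i <= j)%N -> (j < n)%N ->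
  t%:R < rp x i j -> t%:R < rp z i j.
Proof.
move=> Sx Sz tm ij jn.
apply: (@sign_const R n _ i j t%:R (@component_connected _ comp x0) _ x z) => // w /connected_component_sub [_ h].
by apply/eqP; exact: h.
Qed.

Lemma shi_eq (x0 : M) i j : comp x0 -> (i <= j)%N -> (j < n)%N ->
  shi_k R n m (connected_component comp x0) i j = Kv m (rp x0 i j).
Proof.
move=> cx ij jn; apply: eq_big_nat => t /andP[t1 tm]; congr nat_of_bool.
apply/idP/idP.
  move/asboolP => [w Sw tw]; apply: (@sign_S x0 w x0 t i j Sw _ _ ij jn tw).
    exact: connected_component_refl.
  by rewrite -ltnS.
by move=> h; apply/asboolP; exists x0 => //; exact: connected_component_refl.
Qed.

Definition rowsum (x : M) i := (\sum_(i <= j < n) Kv m (rp x i j))%N.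

Lemma phi_eq (x0 : M) : comp x0 ->
  phi_shi R n m (connected_component comp x0) = [seq rowsum x0 i | i <- iota 0 n].
Proof.
move=> cx; rewrite /phi_shi; apply/eq_in_map => i; rewrite mem_iota add0n => /andP[_ iN].
by apply: eq_big_nat => j /andP[ij jn]; apply: shi_eq.
Qed.


Lemma region_data S : dominant_regions R n m S -> exists x0 : M,
  [/\ comp x0, S = connected_component comp x0, pos_ok R n (rp x0)
    & nint_ok R m n (rp x0)].
Proof.
case=> [[x0 [cx ->]] sub]; exists x0; split => //.
  move=> i j ij jn; have [_ D] := sub x0 (connected_component_refl cx).
  rewrite lt_neqAle D // andbT; apply/eqP => e.
  by case: cx => _ /(_ i j 0%N ij jn (leq0n _)); rewrite -e.
by move=> i j t ij jn tm; apply/eqP; case: cx => _ /(_ i j t ij jn tm).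
Qed.

Lemma sorted_map_iota (f : nat -> nat) a k : (forall i, (f i.+1 <= f i)%N) ->
  sorted geq [seq f i | i <- iota a k].
Proof.
move=> h; elim: k a => [|k IH] a //=.
case: k IH => [|k] IH //=; rewrite h /=.
by have := IH a.+1.
Qed.

Lemma rowsum_mono (x : M) i : pos_ok R n (rp x) -> (rowsum x i.+1 <= rowsum x i)%N.
Proof.
move=> po; rewrite /rowsum; case: (ltnP i n) => iN; last by rewrite big_geq //; lia.
rewrite (big_ltn (m:=i) (n:=n)) //; apply: leq_trans (leq_addl _ _).
rewrite !big_nat; apply: leq_sum => j /andP[ij jn]; apply: Kmono.
rewrite (rp_add x i i j) //; have := po i i (leqnn _) iN; lra.
Qed.

Lemma rowsum_le (x : M) i : (rowsum x i <= m * (n - i))%N.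
Proof.
rewrite /rowsum; apply: leq_trans (_ : (\sum_(i <= j < n) m <= _)%N).
  by rewrite !big_nat; apply: leq_sum => j _; apply: Kle.
by rewrite sum_nat_const_nat mulnC.
Qed.

Lemma seg_sub (x1 x2 : M) : comp x1 -> comp x2 -> pos_ok R n (rp x1) -> pos_ok R n (rp x2) ->
  (forall i j, (i <= j)%N -> (j < n)%N -> Kv m (rp x1 i j) = Kv m (rp x2 i j)) ->
  [set x1 + s *: (x2 - x1) | s in `[0%R, 1%R]] `<=` comp.
Proof.
move=> c1 c2 p1 p2 KK _ [s /= s01 <-].
have [s0 s1] : 0 <= s /\ s <= 1.
  by move: s01; rewrite in_itv /= => /andP[].
have ent a : (x1 + s *: (x2 - x1)) ord0 a = x1 ord0 a + s * (x2 ord0 a - x1 ord0 a).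
  by rewrite !mxE.
split.
  rewrite /Vspace /=; under eq_bigr do rewrite ent.
  rewrite big_split /= -mulr_sumr sumrB.
  by case: c1 => -> _; case: c2 => -> _; rewrite subrr mulr0 addr0.
move=> i j k ij jn km.
have rpw : rp (x1 + s *: (x2 - x1)) i j = rp x1 i j + s * (rp x2 i j - rp x1 i j).
  by rewrite /root_pair !ent; lra.
rewrite rpw.
have gt (a b c : R) : c < a -> c < b -> c < a + s * (b - a).
  move=> ca cb; case: (leP a b) => ab.
    have : 0 <= s * (b - a) by apply: mulr_ge0; lra.
    lra.
  have : 0 <= (1 - s) * (a - b) by apply: mulr_ge0; lra.
  lra.
have lt (a b c : R) : a < c -> b < c -> a + s * (b - a) < c.
  move=> ca cb; case: (leP a b) => ab.
    have : 0 <= (1 - s) * (b - a) by apply: mulr_ge0; lra.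
    lra.
  have : 0 <= s * (a - b) by apply: mulr_ge0; lra.
  lra.
case: k km => [|k] km.
  move=> e; have := gt _ _ (0%:R) (p1 i j ij jn) (p2 i j ij jn).
  by rewrite e ltxx.
have k1 : (1 <= k.+1 <= m)%N by rewrite km.
have q1 := Kchar m (rp x1 i j) k.+1 k1; have q2 := Kchar m (rp x2 i j) k.+1 k1.
rewrite KK // in q1.
case: c1 => _ /(_ i j k.+1 ij jn km) ne1.
case: c2 => _ /(_ i j k.+1 ij jn km) ne2.
case: (boolP (k.+1%:R < rp x1 i j)) => h1.
  have h2 : k.+1%:R < rp x2 i j by rewrite q2 -q1.
  move=> e; have := gt _ _ _ h1 h2.
  by rewrite e ltxx.
have h2 : ~~ (k.+1%:R < rp x2 i j) by rewrite q2 -q1.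
move: h1 h2; rewrite -!leNgt !le_eqVlt => /orP[/eqP e1|h1]; first by [].
move=> /orP[/eqP e2|h2]; first by [].
move=> e; have := lt _ _ _ h1 h2.
by rewrite e ltxx.
Qed.


Lemma main_thm : (0 < n)%N -> (0 < m)%N ->
  set_bij (dominant_regions R n m) (shi_partitions n m) (phi_shi R n m).
Proof.
move=> n0 m0; split.
- move=> S /region_data [x0 [cx -> po ni]]; rewrite phi_eq //; split; [|split].
  + by rewrite size_map size_iota.
  + by apply: sorted_map_iota => i; exact: rowsum_mono.
  + move=> i iN; rewrite (nth_map 0%N) ?size_iota // nth_iota //; exact: rowsum_le.
- move=> S1 S2; rewrite !in_setE => /region_data [x1 [c1 -> p1 n1]]
    /region_data [x2 [c2 -> p2 n2]]; rewrite !phi_eq // => e.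
  have rs : forall i, (i < n)%N -> rowsum x1 i = rowsum x2 i.
    move=> i iN; have := congr1 (fun l => nth 0%N l i) e.
    by rewrite /= !(nth_map 0%N) ?size_iota // nth_iota.
  have KK := inj_K m n (rp x1) (rp x2) (rp_add x1) (rp_add x2) p1 p2 n1 n2 rs.
  apply: same_connected_component.
  apply: (connected_component_max _ (@seg_sub x1 x2 c1 c2 p1 p2 KK) (@seg_conn R n x1 x2)).
  + exists 0; first by rewrite /= in_itv /= lexx ler01.
    by rewrite scale0r addr0.
  + exists 1; first by rewrite /= in_itv /= lexx ler01.
    by rewrite scale1r addrC subrK.
- move=> lam [sz [srt bnd]].
  have [y [Py Sy]] := @build R m n lam sz srt bnd n (leqnn n).
  rewrite subnn in Py Sy.
  pose c := (\sum_(a < n.+1) y a) / n.+1%:R.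
  pose x : M := \row_(a < n.+1) (y a - c).
  have rpx i j : (i <= j)%N -> (j < n)%N -> rp x i j = y i - y j.+1.
    move=> ij jn; rewrite /root_pair !mxE.
    rewrite (@inordK n i); last lia.
    rewrite (@inordK n j.+1); last lia.
    lra.
  have cx : comp x.
    split.
      rewrite /Vspace /=; under eq_bigr do rewrite mxE.
      rewrite sumrB sumr_const card_ord -mulr_natr /c divfK ?subrr //.
    move=> i j k ij jn km; rewrite rpx //.
    have [_ ne] := Py i j (leq0n _) ij jn; exact/eqP/(ne k km).
  exists (connected_component comp x).
    split; first by exists x.
    move=> z Sz; split; first by case: (connected_component_sub Sz).
    move=> i j ij jn; apply: ltW.
    apply: (@sign_S x x z 0 i j (connected_component_refl cx) Sz (leq0n _) ij jn).
    rewrite rpx //; have [lt _] := Py i j (leq0n _) ij jn; rewrite /=; lra.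
  rewrite phi_eq // -(mkseq_nth 0%N lam) sz /mkseq; apply/eq_in_map => i.
  rewrite mem_iota add0n => /andP[_ iN]; rewrite -Sy //.
  by apply: eq_big_nat => j /andP[ij jn]; rewrite rpx.
Qed.

End Main.

Theorem theorem4p1 (R : realType) (n m : nat) :
  (0 < n)%N -> (0 < m)%N ->
  set_bij (dominant_regions R n m) (shi_partitions n m) (phi_shi R n m).
Proof. exact: main_thm. Qed.
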